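(* Let $(I,=_I,\neq_I;K)$ be a completely separated set and $\boldsymbol S=(\lambda_0,\lambda_1;\phi_0,\phi_1)$ a family of completely separated sets over it, with $\phi_0(i)=F_i$. Let $\bigotimes_{i\in I}F_i:=\{f_i\circ\mathrm{pr}_i\mid i\in I,\ f_i\in F_i\}$, where $\mathrm{pr}_i(\Theta):=\Theta_i$. Then $$\Big(\prod_{i\in I}\lambda_0(i),\ =_{\prod},\ \neq_{\prod};\ \bigotimes_{i\in I}F_i\Big)$$ is a completely separated set; in particular $\Theta\neq_{\prod}\Theta'\Leftrightarrow\Theta\neq_{(\prod_{i\in I}\lambda_0(i),\bigotimes_{i\in I}F_i)}\Theta'$.
   Context: Setting: constructive (Bishop-style) mathematics with intuitionistic logic. Sets carry an equality; functions respect equalities; $\mathbb F(X)$ = functions $X\to\mathbb R$ with pointwise equality; an extensional subset of $\mathbb F(X)$ is $\{f\mid P(f)\}$ with $P$ respecting $=_{\mathbb F(X)}$. $a\neq_{\mathbb R}b:\Leftrightarrow|a-b|>0$. An inequality $\neq_X$ satisfies $x=_Xy\ \&\ x\neq_Xy\Rightarrow\bot$. Strongly extensional: $f(x)\neq f(y)\Rightarrow x\neq y$. Induced relations: $x=_{(X,F)}x':\Leftrightarrow\forall_{f\in F}f(x)=f(x')$, $x\neq_{(X,F)}x':\Leftrightarrow\exists_{f\in F}f(x)\neq_{\mathbb R}f(x')$. A completely separated set $(X,=_X,\neq_X;F)$: $F$ extensional subset of $\mathbb F(X)$, $\neq_X\Leftrightarrow\neq_{(X,F)}$ and $x=_{(X,F)}x'\Rightarrow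 x=_Xx'$. Family of sets with an inequality over $(I,=_I,\neq_I)$: $i\mapsto(\lambda_0(i),=_{\lambda_0(i)},\neq_{\lambda_0(i)})$ and strongly extensional $\lambda_{ij}:\lambda_0(i)\to\lambda_0(j)$ for $i=_Ij$, with $\lambda_{ii}=\mathrm{id}$ and $\lambda_{jk}\circ\lambda_{ij}=\lambda_{ik}$ whenever $i=_Ij=_Ik$. Family of completely separated sets over completely separated $(I,=_I,\neq_I;K)$: additionally extensional $F_i\subseteq\mathbb F(\lambda_0(i))$ and functions $\phi_{ij}:F_i\to F_j$ ($i=_Ij$) with (a) $\neq_{\lambda_0(i)}\Leftrightarrow\neq_{(\lambda_0(i),F_i)}$, (b) $x=_{(\lambda_0(i),F_i)}x'\Rightarrow x=_{\lambda_0(i)}x'$, (c) $\phi_{ij}(f)=f\circ\lambda_{ji}$ for $f\in F_i$, $i=_Ij$. Pi-set $\prod_{i\in I}\lambda_0(i)$: dependent assignments $\Theta$ with $\Theta_i\in\lambda_0(i)$ for every $i$ and $\Theta_j=_{\lambda_0(j)}\lambda_{ij}(\Theta_i)$ whenever $i=_Ij$; $\Theta=_{\prod}\Theta':\Leftrightarrow\forall_i\Theta_i=_{\lambda_0(i)}\Theta'_i$; $\Theta\neq_{\prod}\Theta':\Leftrightarrow\exists_i\Theta_i\neq_{\lambda_0(i)}\Theta'_i$. *)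

(* Defs.v *)
(* real numbers are Stdlib's R. Bishop-style sets are modelled
   as (carrier type, equality relation, inequality relation). *)
From Stdlib Require Import Reals.
Open Scope R_scope.


Definition Rneq (a b : R) : Prop := 0 < Rabs (a - b).

Definition is_equivalence {X : Type} (eqX : X -> X -> Prop) : Prop :=
  (forall x, eqX x x) /\ (forall x y, eqX x y -> eqX y x) /\
  (forall x y z, eqX x y -> eqX y z -> eqX x z).

Definition is_inequality {X : Type} (eqX neqX : X -> X -> Prop) : Prop :=
  forall x y, eqX x y -> neqX x y -> False.

Definition is_real_function {X : Type} (eqX : X -> X -> Prop) (f : X -> R) : Prop :=
  forall x y, eqX x y -> f x = f y.

Definition extensional_subset {X : Type} (eqX : X -> X -> Prop)
  (F : (X -> R) -> Prop) : Prop :=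
  (forall f, F f -> is_real_function eqX f) /\
  (forall f g, F f -> (forall x, f x = g x) -> F g).

Definition induced_eq {X : Type} (F : (X -> R) -> Prop) (x y : X) : Prop :=
  forall f, F f -> f x = f y.
Definition induced_neq {X : Type} (F : (X -> R) -> Prop) (x y : X) : Prop :=
  exists f, F f /\ Rneq (f x) (f y).

Definition completely_separated {X : Type} (eqX neqX : X -> X -> Prop)
  (F : (X -> R) -> Prop) : Prop :=
  is_equivalence eqX /\ is_inequality eqX neqX /\ extensional_subset eqX F /\
  (forall x y, neqX x y <-> induced_neq F x y) /\
  (forall x y, induced_eq F x y -> eqX x y).

(* Family of sets with an inequality over (I, =_I): lam1 i j H is lambda_{ij},
   for H a witness of i =_I j. *)
Definition family_with_inequality {I : Type} (eqI : I -> I -> Prop)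
  (lam0 : I -> Type)
  (eqL neqL : forall i, lam0 i -> lam0 i -> Prop)
  (lam1 : forall i j, eqI i j -> lam0 i -> lam0 j) : Prop :=
  (forall i, is_equivalence (eqL i) /\ is_inequality (eqL i) (neqL i)) /\
  (forall i j (H : eqI i j) x y, eqL i x y -> eqL j (lam1 i j H x) (lam1 i j H y)) /\
  (forall i j (H : eqI i j) x y,
      neqL j (lam1 i j H x) (lam1 i j H y) -> neqL i x y) /\
  (forall i (H : eqI i i) x, eqL i (lam1 i i H x) x) /\
  (forall i j k (Hij : eqI i j) (Hjk : eqI j k) (Hik : eqI i k) x,
      eqL k (lam1 j k Hjk (lam1 i j Hij x)) (lam1 i k Hik x)).

(* Family of completely separated sets over (I, =_I, <>_I; K), with
   phi_0(i) = F i; the functions phi_ij : F_i -> F_j, phi_ij(f) = f o lambda_ji,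
   exist exactly when F_j is closed under precomposition with lambda_ji. *)
Definition cs_family {I : Type} (eqI neqI : I -> I -> Prop) (K : (I -> R) -> Prop)
  (lam0 : I -> Type)
  (eqL neqL : forall i, lam0 i -> lam0 i -> Prop)
  (lam1 : forall i j, eqI i j -> lam0 i -> lam0 j)
  (F : forall i, (lam0 i -> R) -> Prop) : Prop :=
  family_with_inequality eqI lam0 eqL neqL lam1 /\
  (forall i, extensional_subset (eqL i) (F i)) /\
  (forall i x y, neqL i x y <-> induced_neq (F i) x y) /\
  (forall i x y, induced_eq (F i) x y -> eqL i x y) /\
  (forall i j (Hji : eqI j i) f, F i f -> F j (fun y => f (lam1 j i Hji y))).

Definition PiSet {I : Type} (eqI : I -> I -> Prop) (lam0 : I -> Type)
  (eqL : forall i, lam0 i -> lam0 i -> Prop)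
  (lam1 : forall i j, eqI i j -> lam0 i -> lam0 j) : Type :=
  { T : forall i, lam0 i |
    forall i j (H : eqI i j), eqL j (T j) (lam1 i j H (T i)) }.

Section Pi.
Context {I : Type} {eqI : I -> I -> Prop} {lam0 : I -> Type}
  {eqL : forall i, lam0 i -> lam0 i -> Prop}
  {lam1 : forall i j, eqI i j -> lam0 i -> lam0 j}.

Definition pr (i : I) (T : PiSet eqI lam0 eqL lam1) : lam0 i := proj1_sig T i.

Definition eqPi (T T' : PiSet eqI lam0 eqL lam1) : Prop :=
  forall i, eqL i (pr i T) (pr i T').

Definition neqPi (neqL : forall i, lam0 i -> lam0 i -> Prop)
  (T T' : PiSet eqI lam0 eqL lam1) : Prop :=
  exists i, neqL i (pr i T) (pr i T').

Definition tensorF (F : forall i, (lam0 i -> R) -> Prop)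
  (g : PiSet eqI lam0 eqL lam1 -> R) : Prop :=
  exists i f, F i f /\ forall T, g T = f (pr i T).
End Pi.

(* Main.v *)
Require Import Defs.
From Stdlib Require Import Reals.

Theorem proposition4p5 (I : Type) (eqI neqI : I -> I -> Prop) (K : (I -> R) -> Prop)
  (lam0 : I -> Type) (eqL neqL : forall i, lam0 i -> lam0 i -> Prop)
  (lam1 : forall i j, eqI i j -> lam0 i -> lam0 j)
  (F : forall i, (lam0 i -> R) -> Prop) :
  completely_separated eqI neqI K ->
  cs_family eqI neqI K lam0 eqL neqL lam1 F ->
  completely_separated (@eqPi I eqI lam0 eqL lam1)
                       (@neqPi I eqI lam0 eqL lam1 neqL)
                       (@tensorF I eqI lam0 eqL lam1 F).
Proof.
  intros _ [[Heq _] [Hext [Hneq [Hie _]]]].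
  unfold completely_separated.
  split; [|split; [|split; [|split]]].
  - split; [|split].
    + intros x i. apply (proj1 (proj1 (Heq i))).
    + intros x y H i. apply (proj1 (proj2 (proj1 (Heq i)))). apply H.
    + intros x y z H1 H2 i. apply (proj2 (proj2 (proj1 (Heq i)))) with (pr i y); auto.
  - intros x y H [i Hi]. apply (proj2 (Heq i) _ _ (H i) Hi).
  - split.
    + intros g [i [f [Hf Hg]]] x y Hxy. rewrite !Hg.
      apply (proj1 (Hext i) f Hf). apply Hxy.
    + intros f g [i [h [Hh Hf]]] Hfg. exists i, h. split; auto.
      intros T. rewrite <- Hfg. apply Hf.
  - intros x y; split.
    + intros [i Hi]. apply Hneq in Hi. destruct Hi as [f [Hf Hr]].
      exists (fun T => f (pr i T)). split; auto. exists i, f. split; auto.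
    + intros [g [[i [f [Hf Hg]]] Hr]]. exists i. apply Hneq.
      exists f. split; auto. rewrite !Hg in Hr. exact Hr.
  - intros x y H i. apply Hie. intros f Hf.
    apply (H (fun T => f (pr i T))). exists i, f. split; auto.
Qed.
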